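(* Let $F$ be a monotonic neighborhood frame. There exists a neighborhood frame $G$ with $\mathrm{Th}_{L_=}(G)=\mathrm{Th}_{L_=}(F)$ such that there is a surjective bounded morphism $f:G\to\mathrm{ue}\,F$. Moreover, if $\mathcal K_0$ is either the class of monotonic neighborhood frames or the class of quasi-filter neighborhood frames, and $F\in\mathcal K_0$, then $G$ can be taken in $\mathcal K_0$.
   Context: A neighborhood frame is a pair $F=(F,N^F)$ with $N^F: F\to\mathscr P(\mathscr P(F))$. It is monotonic if each $N^F(w)$ is closed under supersets; quasi-filter if it is monotonic and each $N^F(w)$ is closed under intersections of nonempty finite families. $L_=$ is the least set of formulas containing equality atoms and closed under Boolean combinations, existential quantification, and formation of $x\,\Box_y\,\phi$ ($y$ bound). Satisfaction: as in first-order logic, with $F\models w\,\Box_y\,\phi(y)$ iff $\{v\in F: F\models\phi(v)\}\in N^F(w)$. $\mathrm{Th}_{L_=}(F)$ is the set of $L_=$-sentences true in $F$. A map $f:F\to F'$ is a bounded morphism if for all $w\in F$, $U'\subseteq F'$: $f^{-1}(U')\in N^F(w)\iff U'\in N^{F'}(f(w))$. For a monotonic frame $F$, $F^+=(\mathscr P(F),\Box^F)$ with $\Box^F(X)=\{w: X\in N^F(w)\}$. For a Boolean algebra with monotone operator $(A,\Box)$, $\mathrm{Uf}(A)$ is its set of ultrafilters, $[a]=\{u: a\in u\}$, and closed sets are intersections of sets $[a]$. The ultrafilter frame $\mathrm{Uf}(A)$ has $U\in N^\sigma(u)$ iff there is a closed $K\subseteq U$ such that $[a]\supseteq K$ implies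 $\Box(a)\in u$ for all $a\in A$. The ultrafilter extension is $\mathrm{ue}\,F=\mathrm{Uf}(F^+)$. *)

(* Defs.v *)
From Stdlib Require Import Arith.

Record nframe := NFrame {
  carrier :> Type;
  nbhd : carrier -> (carrier -> Prop) -> Prop
}.

Definition monotonic (F : nframe) : Prop :=
  forall (w : F) (X Y : F -> Prop),
    nbhd F w X -> (forall v, X v -> Y v) -> nbhd F w Y.

(* closure under intersections of nonempty finite families
   = closure under binary intersections *)
Definition quasi_filter (F : nframe) : Prop :=
  monotonic F /\
  forall (w : F) (X Y : F -> Prop),
    nbhd F w X -> nbhd F w Y -> nbhd F w (fun v => X v /\ Y v).

Inductive form : Type :=
| fEq  : nat -> nat -> form
| fNeg : form -> form
| fAnd : form -> form -> form
| fEx  : nat -> form -> form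
| fBox : nat -> nat -> form -> form.    (* x Box_y phi, y bound *)

Definition upd {T : Type} (rho : nat -> T) (y : nat) (v : T) : nat -> T :=
  fun z => if Nat.eqb z y then v else rho z.

Fixpoint sat (F : nframe) (rho : nat -> F) (phi : form) : Prop :=
  match phi with
  | fEq x y => rho x = rho y
  | fNeg p => ~ sat F rho p
  | fAnd p q => sat F rho p /\ sat F rho q
  | fEx y p => exists v : F, sat F (upd rho y v) p
  | fBox x y p => nbhd F (rho x) (fun v => sat F (upd rho y v) p)
  end.

Fixpoint free_in (z : nat) (phi : form) : Prop :=
  match phi with
  | fEq x y => z = x \/ z = y
  | fNeg p => free_in z p
  | fAnd p q => free_in z p \/ free_in z q
  | fEx y p => z <> y /\ free_in z p
  | fBox x y p => z = x \/ (z <> y /\ free_in z p)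
  end.

Definition sentence (phi : form) : Prop := forall z, ~ free_in z phi.

Definition models (F : nframe) (phi : form) : Prop :=
  forall rho : nat -> F, sat F rho phi.

Definition same_theory (F G : nframe) : Prop :=
  forall phi, sentence phi -> (models F phi <-> models G phi).

Definition bounded_morphism (F F' : nframe) (f : F -> F') : Prop :=
  forall (w : F) (U' : F' -> Prop),
    nbhd F w (fun v => U' (f v)) <-> nbhd F' (f w) U'.

Definition surjective {A B : Type} (f : A -> B) : Prop :=
  forall b, exists a, f a = b.

Definition is_ultrafilter (T : Type) (u : (T -> Prop) -> Prop) : Prop :=
  ~ u (fun _ => False) /\
  u (fun _ => True) /\
  (forall X Y : T -> Prop, u X -> (forall t, X t -> Y t) -> u Y) /\
  (forall X Y : T -> Prop, u X -> u Y -> u (fun t => X t /\ Y t)) /\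
  (forall X : T -> Prop, u X \/ u (fun t => ~ X t)).

Definition ultrafilter (T : Type) := { u : (T -> Prop) -> Prop | is_ultrafilter T u }.

Definition boxF (F : nframe) (X : F -> Prop) : F -> Prop := fun w => nbhd F w X.

Definition ufset (T : Type) (a : T -> Prop) : ultrafilter T -> Prop :=
  fun u => proj1_sig u a.

(* closed sets of Uf: intersections of families of sets [a] *)
Definition uf_closed (T : Type) (K : ultrafilter T -> Prop) : Prop :=
  exists S : (T -> Prop) -> Prop,
    forall u, K u <-> (forall a, S a -> ufset T a u).

(* ue F = Uf(F^+) *)
Definition ue (F : nframe) : nframe :=
  {| carrier := ultrafilter F;
     nbhd := fun u U =>
       exists K : ultrafilter F -> Prop,
         uf_closed F K /\ (forall v, K v -> U v) /\
         (forall a : F -> Prop,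
            (forall v, K v -> ufset F a v) -> proj1_sig u (boxF F a)) |}.

Definition lemma4p4_conclusion (F G : nframe) : Prop :=
  same_theory G F /\
  exists f : G -> ue F, surjective f /\ bounded_morphism G (ue F) f.

(* Main.v *)
Require Import Defs.
From Stdlib Require Import List Arith Lia Classical ClassicalEpsilon FunctionalExtensionality PropExtensionality ProofIrrelevance.
From mathcomp Require ssreflect ssrfun ssrbool classical_sets filter.

Module UFM.
Import mathcomp.boot.ssreflect mathcomp.boot.ssrfun mathcomp.boot.ssrbool mathcomp.classical.classical_sets mathcomp.classical.filter.

Lemma exists_D (A : Type) : exists D : (list A -> Prop) -> Prop,
  (~ D (fun _ => False)) /\
  (forall X Y : list A -> Prop, D X -> (forall t, X t -> Y t) -> D Y) /\
  (forall X Y : list A -> Prop, D X -> D Y -> D (fun t => X t /\ Y t)) /\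
  (forall X : list A -> Prop, D X \/ D (fun t => ~ X t)) /\
  (forall a : A, D (fun i => In a i)).
Proof.
set F0 := fun X : list A -> Prop => exists l : list A, forall i, (forall a, In a l -> In a i) -> X i.
have PF : ProperFilter F0.
  split.
  - move=> [l Hl]; exact: (Hl l (fun a h => h)).
  - split.
    + by exists nil.
    + move=> X Y [l1 H1] [l2 H2]; exists (l1 ++ l2) => i Hi; split.
      * apply: H1 => a ha; apply: Hi; apply: in_or_app; by left.
      * apply: H2 => a ha; apply: Hi; apply: in_or_app; by right.
    + move=> X Y XY [l Hl]; exists l => i Hi; apply: XY; exact: Hl.
have [G [UG FG]] := ultraFilterLemma PF.
exists G; split; [|split; [|split; [|split]]].
- exact: (@filter_not_empty _ G ultra_proper).
- move=> X Y GX XY; apply: (@filterS _ G _ X Y) => //.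
- move=> X Y GX GY; exact: (@filterI _ G _ X Y GX GY).
- move=> X; exact: (in_ultra_setVsetC X UG).
- move=> a; apply: FG; exists (a :: nil) => i Hi; apply: Hi; by left.
Qed.
End UFM.

Lemma upd_eq {T} (rho : nat -> T) y v : upd rho y v y = v.
Proof. unfold upd. rewrite Nat.eqb_refl. reflexivity. Qed.
Lemma upd_neq {T} (rho : nat -> T) y v z : z <> y -> upd rho y v z = rho z.
Proof. intro H. unfold upd. apply Nat.eqb_neq in H. rewrite H. reflexivity. Qed.

Lemma sat_ext (F : nframe) (phi : form) : forall rho rho' : nat -> F,
  (forall z, free_in z phi -> rho z = rho' z) -> (sat F rho phi <-> sat F rho' phi).
Proof.
  induction phi; intros rho rho' H; simpl in *.
  - rewrite (H n) by auto. rewrite (H n0) by auto. tauto.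
  - rewrite (IHphi rho rho') by auto. tauto.
  - rewrite (IHphi1 rho rho') by auto. rewrite (IHphi2 rho rho') by auto. tauto.
  - assert (Hu : forall v z, free_in z phi -> upd rho n v z = upd rho' n v z).
    { intros v z Hz; destruct (Nat.eq_dec z n) as [->|Hn]; [rewrite !upd_eq; auto| rewrite !upd_neq by auto; apply H; auto]. }
    split; intros [v Hv]; exists v.
    + apply (proj1 (IHphi (upd rho n v) (upd rho' n v) (Hu v))); exact Hv.
    + apply (proj2 (IHphi (upd rho n v) (upd rho' n v) (Hu v))); exact Hv.
  - assert (E : (fun v => sat F (upd rho n0 v) phi) = (fun v => sat F (upd rho' n0 v) phi)).
    { apply functional_extensionality; intro v; apply propositional_extensionality.
      apply IHphi. intros z Hz; destruct (Nat.eq_dec z n0) as [->|Hn]; [rewrite !upd_eq; auto| rewrite !upd_neq by auto; apply H; auto]. }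
    rewrite E. rewrite (H n) by auto. tauto.
Qed.

Fixpoint bnd (phi : form) : nat :=
  match phi with
  | fEq x y => S (max x y)
  | fNeg p => bnd p
  | fAnd p q => max (bnd p) (bnd q)
  | fEx y p => bnd p
  | fBox x y p => max (S x) (bnd p)
  end.

Lemma free_bnd phi : forall z, free_in z phi -> z < bnd phi.
Proof.
  induction phi; cbn [bnd free_in]; intros z Hz.
  - destruct Hz; subst; lia.
  - auto.
  - destruct Hz as [Hz|Hz]; [specialize (IHphi1 _ Hz)|specialize (IHphi2 _ Hz)]; lia.
  - destruct Hz as [_ Hz]; auto.
  - destruct Hz as [Hz|[_ Hz]]; [subst; lia| specialize (IHphi _ Hz); lia].
Qed.

Section Constr.
Variable F : nframe.
Hypothesis HF : monotonic F.
Variable w0 : F.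
Definition Idx := list (F -> Prop).
Variable D : (Idx -> Prop) -> Prop.
Hypothesis D0 : ~ D (fun _ => False).
Hypothesis DS : forall X Y : Idx -> Prop, D X -> (forall t, X t -> Y t) -> D Y.
Hypothesis DI : forall X Y : Idx -> Prop, D X -> D Y -> D (fun t => X t /\ Y t).
Hypothesis DC : forall X : Idx -> Prop, D X \/ D (fun t => ~ X t).
Hypothesis Dcone : forall a, D (fun i => In a i).

Definition Seq := nat -> Idx.
Definition nil0 : Seq := fun _ => nil.
Definition setq (s : Seq) (k : nat) (i : Idx) : Seq := fun j => if Nat.eqb j k then i else s j.
Definition trunc (n : nat) (s : Seq) : Seq := fun j => if Nat.ltb j n then s j else nil.

Fixpoint Q (n : nat) (X : Seq -> Prop) : Prop :=
  match n with
  | 0 => X nil0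
  | S m => D (fun i => Q m (fun s => X (setq s m i)))
  end.

Lemma D_const (P : Prop) : D (fun _ => P) <-> P.
Proof.
  split; intro H.
  - destruct (classic P) as [p|np]; auto. exfalso; apply D0. apply (DS _ _ H). auto.
  - apply (DS _ _ (Dcone (fun _ => True))). auto.
Qed.

Lemma Q_mono n : forall X Y : Seq -> Prop, (forall s, X s -> Y s) -> Q n X -> Q n Y.
Proof.
  induction n; simpl; intros X Y H HX; auto.
  apply (DS _ _ HX). intros i Hi. apply (IHn _ _ (fun s => H _) Hi).
Qed.

Lemma Q_and n : forall X Y : Seq -> Prop, Q n X -> Q n Y -> Q n (fun s => X s /\ Y s).
Proof.
  induction n; simpl; intros X Y HX HY; auto.
  apply (DS _ _ (DI _ _ HX HY)). intros i [H1 H2]. apply (IHn _ _ H1 H2).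
Qed.

Lemma Q_false n : ~ Q n (fun _ => False).
Proof.
  induction n; simpl; auto. intro H. apply D0. apply (DS _ _ H). auto.
Qed.

Lemma Q_compl n : forall X : Seq -> Prop, Q n X \/ Q n (fun s => ~ X s).
Proof.
  induction n; simpl; intros X.
  - apply classic.
  - destruct (DC (fun i => Q n (fun s => X (setq s n i)))) as [H|H]; [left; auto|right].
    apply (DS _ _ H). intros i Hi. destruct (IHn (fun s => X (setq s n i))); tauto.
Qed.

Lemma Q_const n (P : Prop) : Q n (fun _ => P) <-> P.
Proof.
  induction n; simpl; [tauto|]. rewrite <- (D_const P).
  split; intro H; apply (DS _ _ H); intros; apply IHn; auto.
Qed.

Lemma Q_true n : Q n (fun _ => True).
Proof. apply Q_const; auto. Qed.

Lemma Q_all n (X : Seq -> Prop) : (forall s, X s) -> Q n X.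
Proof. intro H. apply (Q_mono n _ _ (fun s _ => H s) (Q_true n)). Qed.

Definition indep (k : nat) (X : Seq -> Prop) := forall s i, X (setq s k i) <-> X s.
Definition lvl (n : nat) (X : Seq -> Prop) := forall k, n <= k -> indep k X.

Lemma Q_lift1 n X : indep n X -> (Q (S n) X <-> Q n X).
Proof.
  intro H. simpl. rewrite <- (D_const (Q n X)).
  split; intro H1; apply (DS _ _ H1); intros i Hi; apply (Q_mono n _ _ (fun s => proj1 (H s i)) Hi)
    || apply (Q_mono n _ _ (fun s => proj2 (H s i)) Hi).
Qed.

Lemma Q_lift n X : lvl n X -> forall m, n <= m -> (Q m X <-> Q n X).
Proof.
  intros H m Hm. induction Hm; [tauto|]. rewrite Q_lift1; [exact IHHm| apply H; lia].
Qed.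

Definition Qev (X : Seq -> Prop) := exists n, forall m, n <= m -> Q m X.

Lemma Qev_mono X Y : (forall s, X s -> Y s) -> Qev X -> Qev Y.
Proof. intros H [n Hn]. exists n. intros m Hm. apply (Q_mono m _ _ H (Hn m Hm)). Qed.

Lemma Qev_and X Y : Qev X -> Qev Y -> Qev (fun s => X s /\ Y s).
Proof. intros [n Hn] [n' Hn']. exists (max n n'). intros m Hm. apply Q_and; [apply Hn|apply Hn']; lia. Qed.

Lemma Qev_false : ~ Qev (fun _ => False).
Proof. intros [n Hn]. apply (Q_false n). apply Hn. lia. Qed.

Lemma Qev_all (X : Seq -> Prop) : (forall s, X s) -> Qev X.
Proof. intro H. exists 0. intros. apply Q_all; auto. Qed.

Lemma Qev_const (P : Prop) : Qev (fun _ => P) <-> P.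
Proof.
  split. - intros [n Hn]. apply (Q_const n). apply Hn. lia.
  - intro p. apply Qev_all. auto.
Qed.

Lemma Qev_of n X : lvl n X -> Q n X -> Qev X.
Proof. intros L H. exists n. intros m Hm. apply (Q_lift n X L m Hm). auto. Qed.

Lemma Qev_to n X : lvl n X -> Qev X -> Q n X.
Proof. intros L [n' H]. apply (Q_lift n X L (max n n')). lia. apply H. lia. Qed.

Lemma lvl_neg n X : lvl n X -> lvl n (fun s => ~ X s).
Proof. intros L k Hk s i. specialize (L k Hk s i). tauto. Qed.

Lemma Qev_compl n X : lvl n X -> Qev X \/ Qev (fun s => ~ X s).
Proof.
  intro L. destruct (Q_compl n X); [left; apply (Qev_of n); auto | right; apply (Qev_of n); auto using lvl_neg].
Qed.

Lemma Qev_not n X : lvl n X -> (Qev (fun s => ~ X s) <-> ~ Qev X).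
Proof.
  intro L. split.
  - intros H1 H2. apply Qev_false. apply (Qev_mono _ _ (fun s (h : ~ X s /\ X s) => proj1 h (proj2 h)) (Qev_and _ _ H1 H2)).
  - intro H. destruct (Qev_compl n X L); tauto.
Qed.

Lemma trunc_set n k s i : n <= k -> trunc n (setq s k i) = trunc n s.
Proof.
  intro H. apply functional_extensionality. intro j. unfold trunc, setq.
  destruct (Nat.ltb j n) eqn:E; auto. apply Nat.ltb_lt in E.
  assert (j <> k) by lia. apply Nat.eqb_neq in H0. rewrite H0. auto.
Qed.

Lemma trunc_trunc n m s : n <= m -> trunc n (trunc m s) = trunc n s.
Proof.
  intro H. apply functional_extensionality. intro j. unfold trunc.
  destruct (Nat.ltb j n) eqn:E; auto. apply Nat.ltb_lt in E.
  assert (j < m) by lia. apply Nat.ltb_lt in H0. rewrite H0. auto.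
Qed.

Lemma trunc_set_at n s i : trunc (S n) (setq s n i) n = i.
Proof.
  unfold trunc, setq. assert (n < S n) by lia. apply Nat.ltb_lt in H. rewrite H. rewrite Nat.eqb_refl. auto.
Qed.


Definition Rep := (nat * (Seq -> F))%type.
Definition ev (r : Rep) (s : Seq) : F := snd r (trunc (fst r) s).

Lemma ev_set r k s i : fst r <= k -> ev r (setq s k i) = ev r s.
Proof. intro H. unfold ev. rewrite trunc_set; auto. Qed.

Lemma ev_trunc r m s : fst r <= m -> ev r (trunc m s) = ev r s.
Proof. intro H. unfold ev. rewrite trunc_trunc; auto. Qed.

Definition eqv (r1 r2 : Rep) := Qev (fun s => ev r1 s = ev r2 s).

Lemma eqv_refl r : eqv r r.
Proof. apply Qev_all. auto. Qed.
Lemma eqv_sym r1 r2 : eqv r1 r2 -> eqv r2 r1.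
Proof. apply Qev_mono. auto. Qed.
Lemma eqv_trans r1 r2 r3 : eqv r1 r2 -> eqv r2 r3 -> eqv r1 r3.
Proof. intros H1 H2. apply (Qev_mono _ _ (fun s h => eq_trans (proj1 h) (proj2 h)) (Qev_and _ _ H1 H2)). Qed.

Definition inhRep : inhabited Rep := inhabits (0, fun _ => w0).
Definition canon (r : Rep) : Rep := epsilon inhRep (fun r' => eqv r' r).

Lemma canon_eqv r : eqv (canon r) r.
Proof. unfold canon. apply epsilon_spec. exists r. apply eqv_refl. Qed.

Lemma canon_resp r1 r2 : eqv r1 r2 -> canon r1 = canon r2.
Proof.
  intro H. unfold canon. f_equal. apply functional_extensionality. intro r.
  apply propositional_extensionality. split; intro H'; eauto using eqv_trans, eqv_sym.
Qed.

Lemma canon_idem r : canon (canon r) = canon r.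
Proof. apply canon_resp. apply canon_eqv. Qed.

Definition Gt := { r : Rep | canon r = r }.
Definition cls (r : Rep) : Gt := exist _ (canon r) (canon_idem r).
Definition evG (v : Gt) := ev (proj1_sig v).
Definition levG (v : Gt) := fst (proj1_sig v).

Lemma evG_set v k s i : levG v <= k -> evG v (setq s k i) = evG v s.
Proof. apply ev_set. Qed.
Lemma evG_trunc v m s : levG v <= m -> evG v (trunc m s) = evG v s.
Proof. apply ev_trunc. Qed.

Lemma Qev_cls r (P : Seq -> F -> Prop) : Qev (fun s => P s (ev r s)) -> Qev (fun s => P s (evG (cls r) s)).
Proof.
  intro H. eapply Qev_mono; [| exact (Qev_and _ _ H (canon_eqv r))]; cbv beta.
  intros s [h1 h2]. unfold evG, cls; simpl. rewrite h2. auto.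
Qed.
Lemma Qev_cls' r (P : Seq -> F -> Prop) : Qev (fun s => P s (evG (cls r) s)) -> Qev (fun s => P s (ev r s)).
Proof.
  intro H. eapply Qev_mono; [| exact (Qev_and _ _ H (canon_eqv r))]; cbv beta.
  intros s [h1 h2]. unfold evG, cls in h1; simpl in h1. rewrite <- h2. auto.
Qed.

Lemma Gt_eq (v1 v2 : Gt) : eqv (proj1_sig v1) (proj1_sig v2) -> v1 = v2.
Proof.
  destruct v1 as [r1 p1], v2 as [r2 p2]; simpl. intro H.
  assert (E : r1 = r2). { rewrite <- p1, <- p2. apply canon_resp. auto. }
  subst r2. f_equal. apply proof_irrelevance.
Qed.

Definition IS := (nat * (Seq -> F -> Prop))%type.
Definition inI (A : IS) (s : Seq) : F -> Prop := snd A (trunc (fst A) s).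

Lemma inI_set A k s i : fst A <= k -> inI A (setq s k i) = inI A s.
Proof. intro H. unfold inI. rewrite trunc_set; auto. Qed.
Lemma inI_trunc A m s : fst A <= m -> inI A (trunc m s) = inI A s.
Proof. intro H. unfold inI. rewrite trunc_trunc; auto. Qed.

Definition nbhdG (x : Gt) (X : Gt -> Prop) : Prop :=
  exists A : IS, Qev (fun s => nbhd F (evG x s) (inI A s)) /\
    forall v : Gt, Qev (fun s => inI A s (evG v s)) -> X v.

Definition G : nframe := {| carrier := Gt; nbhd := nbhdG |}.

Lemma nbhdG_ext x (X Y : Gt -> Prop) : (forall v, X v <-> Y v) -> (nbhdG x X <-> nbhdG x Y).
Proof. intro H. unfold nbhdG. split; intros [A [H1 H2]]; exists A; split; auto; intros v Hv; apply H; auto. Qed.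

Lemma G_monotonic : monotonic G.
Proof. intros w X Y [A [H1 H2]] HXY. exists A. split; auto. Qed.

Definition val (rho : nat -> Gt) (s : Seq) : nat -> F := fun k => evG (rho k) s.

Fixpoint mlev (rho : nat -> Gt) (b : nat) : nat :=
  match b with 0 => 0 | S b' => max (levG (rho b')) (mlev rho b') end.

Lemma mlev_ge rho b : forall k, k < b -> levG (rho k) <= mlev rho b.
Proof. induction b; simpl; intros k Hk; [lia|]. destruct (Nat.eq_dec k b); [subst; lia|]. specialize (IHb k). lia. Qed.

Lemma val_set rho b k s i z : mlev rho b <= k -> z < b -> val rho (setq s k i) z = val rho s z.
Proof. intros H Hz. unfold val. apply evG_set. pose proof (mlev_ge rho b z Hz). lia. Qed.
Lemma val_trunc rho b m s z : mlev rho b <= m -> z < b -> val rho (trunc m s) z = val rho s z.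
Proof. intros H Hz. unfold val. apply evG_trunc. pose proof (mlev_ge rho b z Hz). lia. Qed.

Lemma val_upd rho y v s : val (upd rho y v) s = upd (val rho s) y (evG v s).
Proof. apply functional_extensionality. intro z. unfold val, upd. destruct (Nat.eqb z y); auto. Qed.

Lemma X_lvl phi rho : lvl (mlev rho (bnd phi)) (fun s => sat F (val rho s) phi).
Proof.
  intros k Hk s i. apply sat_ext. intros z Hz. apply (val_set rho (bnd phi)); auto. apply free_bnd; auto.
Qed.
Lemma X_trunc phi rho m s : mlev rho (bnd phi) <= m -> (sat F (val rho (trunc m s)) phi <-> sat F (val rho s) phi).
Proof.
  intros Hm. apply sat_ext. intros z Hz. apply (val_trunc rho (bnd phi)); auto. apply free_bnd; auto.
Qed.

Lemma Xb_agree y p rho b s s' w : (forall z, z < b -> val rho s z = val rho s' z) ->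
  (forall z, free_in z p -> z <> y -> z < b) ->
  (sat F (upd (val rho s) y w) p <-> sat F (upd (val rho s') y w) p).
Proof.
  intros H Hb. apply sat_ext. intros z Hz. destruct (Nat.eq_dec z y) as [->|Hn].
  - rewrite !upd_eq; auto.
  - rewrite !upd_neq by auto. apply H. apply Hb; auto.
Qed.

Definition inhF : inhabited F := inhabits w0.

Lemma los phi : forall rho : nat -> Gt, sat G rho phi <-> Qev (fun s => sat F (val rho s) phi).
Proof.
  induction phi; intros rho.
  - simpl. split.
    + intro E. apply Qev_all. intro s. change (evG (rho n) s = evG (rho n0) s). rewrite E. reflexivity.
    + intro H. apply Gt_eq. exact H.
  - simpl. rewrite IHphi. symmetry. apply (Qev_not (mlev rho (bnd phi))). apply (X_lvl phi rho).
  - simpl. rewrite IHphi1, IHphi2. split.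
    + intros [h1 h2]. apply Qev_and; auto.
    + intro h. split; (eapply Qev_mono; [|exact h]); cbv beta; tauto.
  - simpl. split.
    + intros [v Hv]. rewrite IHphi in Hv. eapply Qev_mono; [|exact Hv]. cbv beta. intros s Hs.
      exists (evG v s). rewrite <- val_upd. exact Hs.
    + intro H. set (nn := mlev rho (bnd phi)).
      set (g0 := fun t => epsilon inhF (fun w => sat F (upd (val rho t) n w) phi)).
      exists (cls (nn, g0)). rewrite IHphi.
      eapply Qev_mono; [|apply (Qev_cls (nn, g0) (fun s w => sat F (upd (val rho s) n w) phi))].
      { cbv beta. intros s Hs. rewrite val_upd. exact Hs. }
      eapply Qev_mono; [|exact H]. cbv beta. intros s [w Hw]. unfold ev; simpl.
      assert (Ag : forall w', sat F (upd (val rho (trunc nn s)) n w') phi <-> sat F (upd (val rho s) n w') phi).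
      { intro w'. apply (Xb_agree n phi rho (bnd phi)).
        - intros z Hz. apply (val_trunc rho (bnd phi)); auto.
        - intros z Hz _. apply free_bnd; auto. }
      apply Ag. unfold g0. apply epsilon_spec. exists w. apply Ag. exact Hw.
  - simpl. set (nn := mlev rho (bnd (fBox n n0 phi))).
    set (Phi := fun s w => sat F (upd (val rho s) n0 w) phi).
    rewrite (nbhdG_ext (rho n) _ (fun v => Qev (fun s => Phi s (evG v s)))).
    2:{ intro v. rewrite IHphi. split; intro HH; (eapply Qev_mono; [|exact HH]); cbv beta; intros s Hs.
        - unfold Phi. rewrite <- val_upd. exact Hs.
        - rewrite val_upd. exact Hs. }
    assert (Ag : forall s s' w, (forall z, z < bnd (fBox n n0 phi) -> val rho s z = val rho s' z) -> (Phi s w <-> Phi s' w)).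
    { intros s s' w Hz. apply (Xb_agree n0 phi rho (bnd (fBox n n0 phi))); auto.
      intros z Hz1 Hz2. apply free_bnd. simpl. auto. }
    split.
    + intros [A [H1 H2]]. set (N := max (fst A) nn).
      set (Y := fun s => forall w, inI A s w -> Phi s w).
      assert (LY : lvl N Y).
      { intros k Hk s i. unfold Y. rewrite inI_set by lia.
        split; intros h w hw; specialize (h w hw); [apply (Ag (setq s k i)) | apply (Ag s)]; auto;
        intros z Hz; [| symmetry]; apply (val_set rho (bnd (fBox n n0 phi))); auto; unfold nn in *; lia. }
      destruct (Qev_compl N Y LY) as [HY|HnY].
      * eapply Qev_mono; [|exact (Qev_and _ _ H1 HY)]. cbv beta. intros s [h1 h2]. apply (HF _ _ _ h1). auto.
      * exfalso.
        set (g0 := fun t => epsilon inhF (fun w => inI A t w /\ ~ Phi t w)).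
        assert (K : Qev (fun s => inI A s (ev (N, g0) s) /\ ~ Phi s (ev (N, g0) s))).
        { eapply Qev_mono; [|exact HnY]. cbv beta. intros s Hs. unfold Y in Hs.
          apply not_all_ex_not in Hs. destruct Hs as [w Hw].
          assert (Ag2 : forall w', Phi (trunc N s) w' <-> Phi s w').
          { intro w'. apply Ag. intros z Hz. apply (val_trunc rho (bnd (fBox n n0 phi))); auto. unfold nn in *; lia. }
          assert (E : inI A (trunc N s) = inI A s) by (apply inI_trunc; lia).
          unfold ev; simpl. rewrite <- E, <- Ag2. unfold g0. apply epsilon_spec. exists w.
          rewrite E, Ag2. tauto. }
        assert (K1 := H2 (cls (N, g0)) (Qev_cls (N, g0) (fun s w => inI A s w) (Qev_mono _ _ (fun s h => proj1 h) K))).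
        apply Qev_cls' in K1. apply Qev_false. eapply Qev_mono; [|exact (Qev_and _ _ K1 K)]. cbv beta. tauto.
    + intro H. exists (nn, Phi). split.
      * eapply Qev_mono; [|exact H]. cbv beta. intros s Hs. apply (HF _ _ _ Hs). intros w Hw.
        unfold inI; simpl. apply (Ag s). 2: exact Hw. intros z Hz. symmetry. apply (val_trunc rho (bnd (fBox n n0 phi))); auto.
      * intros v Hv. eapply Qev_mono; [|exact Hv]. cbv beta. intros s Hs. unfold inI in Hs; simpl in Hs.
        apply (Ag (trunc nn s)). 2: exact Hs. intros z Hz. apply (val_trunc rho (bnd (fBox n n0 phi))); auto.
Qed.

Lemma G_same_theory : same_theory G F.
Proof.
  intros phi Hs.
  assert (HF0 : forall rho : nat -> F, sat F rho phi <-> sat F (fun _ => w0) phi).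
  { intro rho. apply sat_ext. intros z Hz. exfalso. apply (Hs z Hz). }
  unfold models. split.
  - intros H rho. apply HF0. specialize (H (fun _ => cls (0, fun _ => w0))).
    rewrite los in H. eapply Qev_const. eapply Qev_mono; [|exact H]. cbv beta. intros s h. exact (proj1 (HF0 _) h).
  - intros H rho. rewrite los. apply Qev_all. intro s. apply HF0. apply H.
Qed.

Lemma hset_uf (v : Gt) : is_ultrafilter F (fun a => Qev (fun s => a (evG v s))).
Proof.
  split; [|split; [|split; [|split]]].
  - apply Qev_false.
  - apply Qev_all; auto.
  - intros X Y HX HXY. eapply Qev_mono; [|exact HX]. cbv beta. auto.
  - intros X Y HX HY. exact (Qev_and _ _ HX HY).
  - intro X. apply (Qev_compl (levG v)). intros k Hk s i. rewrite evG_set; tauto.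
Qed.

Definition h (v : Gt) : ultrafilter F := exist _ _ (hset_uf v).

Lemma uf_eq (u v : ultrafilter F) : (forall a, proj1_sig u a -> proj1_sig v a) -> u = v.
Proof.
  destruct u as [u [u0 [uT [uS [uI uC]]]]], v as [v [v0 [vT [vS [vI vC]]]]]; simpl. intro H.
  assert (E : u = v).
  { apply functional_extensionality. intro a. apply propositional_extensionality. split; auto.
    intro va. destruct (uC a) as [ua|una]; auto. exfalso. apply v0.
    apply (vS _ _ (vI _ _ va (H _ una))). tauto. }
  subst v. f_equal. apply proof_irrelevance.
Qed.

Lemma bigI_in (T : Type) (u : (T -> Prop) -> Prop) (Hu : is_ultrafilter T u) (P : (T -> Prop) -> Prop) :
  forall l, (forall a, In a l -> P a -> u a) -> u (fun t => forall a, In a l -> P a -> a t).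
Proof.
  destruct Hu as [u0 [uT [uS [uI uC]]]].
  induction l; intro H.
  - apply (uS _ _ uT). simpl. tauto.
  - destruct (classic (P a)) as [pa|npa].
    + apply (uS _ _ (uI _ _ (H a (or_introl eq_refl) pa) (IHl (fun b hb => H b (or_intror hb))))).
      intros t [h1 h2] b [<-|hb] pb; [exact h1| exact (h2 b hb pb)].
    + apply (uS _ _ (IHl (fun b hb => H b (or_intror hb)))).
      intros t h1 b [<-|hb] pb; [tauto| exact (h1 b hb pb)].
Qed.

Lemma uf_nonempty (T : Type) (u : (T -> Prop) -> Prop) (Hu : is_ultrafilter T u) a : u a -> exists t, a t.
Proof.
  destruct Hu as [u0 [uT [uS [uI uC]]]]. intro ua. apply NNPP. intro hn. apply u0.
  apply (uS _ _ ua). intros t at'. apply hn. eauto.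
Qed.

Lemma h_surj : surjective h.
Proof.
  intro u. set (B := fun (i : Idx) (t : F) => forall a, In a i -> proj1_sig u a -> a t).
  set (g0 := fun s : Seq => epsilon inhF (B (s 0))).
  exists (cls (1, g0)). symmetry. apply uf_eq. intros a ua. simpl.
  apply (Qev_cls (1, g0) (fun s w => a w)).
  apply (Qev_of 1).
  { intros k Hk s i. rewrite ev_set; simpl; tauto. }
  simpl. apply (DS _ _ (Dcone a)). intros i Hi. unfold ev; simpl.
  unfold g0. assert (E : trunc 1 (setq nil0 0 i) 0 = i) by reflexivity. rewrite E.
  assert (Hb : B i (epsilon inhF (B i))).
  { apply epsilon_spec. apply (uf_nonempty F (proj1_sig u) (proj2_sig u)).
    apply bigI_in. exact (proj2_sig u). auto. }
  apply Hb; auto.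
Qed.

Lemma h_bm : bounded_morphism G (ue F) h.
Proof.
  intros w U'. split.
  - intros [A [H1 H2]].
    set (N := max (fst A) (levG w)).
    set (Sa := fun a : F -> Prop => Q N (fun s => forall t, inI A s t -> a t)).
    assert (LS : forall a, lvl N (fun s => forall t, inI A s t -> a t)).
    { intros a k Hk s i. rewrite inI_set by lia. tauto. }
    exists (fun u => forall a, Sa a -> proj1_sig u a). split; [|split].
    + exists Sa. intro u. unfold ufset. tauto.
    + intros u Ku.
      set (B := fun (i : Idx) (t : F) => forall a, In a i -> proj1_sig u a -> a t).
      assert (Hne : forall i, Q N (fun s => exists t, inI A s t /\ B i t)).
      { intro i. destruct (Q_compl N (fun s => exists t, inI A s t /\ B i t)) as [H|H]; auto. exfalso.
        assert (Sn : Sa (fun t => ~ B i t)).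
        { apply (Q_mono N _ _ (fun s hs t ht hb => hs (ex_intro _ t (conj ht hb))) H). }
        specialize (Ku _ Sn).
        assert (ub : proj1_sig u (B i)) by (apply bigI_in; [exact (proj2_sig u)| auto]).
        destruct (proj2_sig u) as [u0 [uT [uS [uI uC]]]]. apply u0. apply (uS _ _ (uI _ _ Ku ub)). tauto. }
      set (g0 := fun s : Seq => epsilon inhF (fun t => inI A s t /\ B (s N) t)).
      assert (Main : forall a, proj1_sig u a -> Qev (fun s => inI A s (ev (S N, g0) s) /\ a (ev (S N, g0) s))).
      { intros a ua. apply (Qev_of (S N)).
        - intros k Hk s i. rewrite ev_set by (simpl; lia). rewrite inI_set by lia. tauto.
        - simpl. apply (DS _ _ (Dcone a)). intros i Hi. eapply Q_mono; [|exact (Hne i)]. cbv beta.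
          intros s [t0 ht0]. rewrite inI_set by lia. unfold ev; simpl.
          assert (E1 : trunc (S N) (setq s N i) N = i) by apply trunc_set_at.
          assert (E2 : inI A (trunc (S N) (setq s N i)) = inI A s).
          { rewrite inI_trunc by lia. apply inI_set; lia. }
          assert (sp : inI A (trunc (S N) (setq s N i)) (g0 (trunc (S N) (setq s N i))) /\
                       B (trunc (S N) (setq s N i) N) (g0 (trunc (S N) (setq s N i)))).
          { apply epsilon_spec. exists t0. rewrite E1, E2. auto. }
          rewrite E1, E2 in sp. destruct sp as [sp1 sp2]. split; [exact sp1| exact (sp2 a Hi ua)]. }
      assert (uT : proj1_sig u (fun _ => True)) by (destruct (proj2_sig u) as [_ [uT _]]; exact uT).
      assert (Hv : h (cls (S N, g0)) = u).
      { symmetry. apply uf_eq. intros a ua. simpl. apply (Qev_cls (S N, g0) (fun s w => a w)).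
        eapply Qev_mono; [|exact (Main a ua)]. cbv beta. tauto. }
      rewrite <- Hv. apply H2. apply (Qev_cls (S N, g0) (fun s w => inI A s w)).
      eapply Qev_mono; [|exact (Main _ uT)]. cbv beta. tauto.
    + intros a Ha. simpl.
      assert (Sa a).
      { destruct (Q_compl N (fun s => forall t, inI A s t -> a t)) as [HH|HH]; auto. exfalso.
        set (g0 := fun s : Seq => epsilon inhF (fun t => inI A s t /\ ~ a t)).
        assert (P1 : forall s, ~ (forall t, inI A s t -> a t) -> inI A s (ev (N, g0) s) /\ ~ a (ev (N, g0) s)).
        { intros s hs. unfold ev; simpl. rewrite <- (inI_trunc A N s) by lia.
          apply epsilon_spec. apply not_all_ex_not in hs. destruct hs as [t ht]. exists t.
          rewrite inI_trunc by lia. tauto. }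
        assert (LN : forall (P : F -> Prop), lvl N (fun s => P (ev (N, g0) s))).
        { intros P k Hk s i. rewrite ev_set by (simpl; lia). tauto. }
        assert (Kv : forall b, Sa b -> ufset F b (h (cls (N, g0)))).
        { intros b Sb. unfold ufset. simpl. apply (Qev_cls (N, g0) (fun s w => b w)).
          apply (Qev_of N); [apply LN|]. eapply Q_mono; [|exact (Q_and _ _ _ Sb HH)]. cbv beta.
          intros s [h1 h2]. apply h1. apply (P1 s h2). }
        specialize (Ha _ Kv). unfold ufset in Ha. simpl in Ha.
        apply (Qev_cls' (N, g0) (fun s w => a w)) in Ha.
        assert (Hn : Qev (fun s => ~ a (ev (N, g0) s))).
        { apply (Qev_of N); [apply (LN (fun x => ~ a x))|]. eapply Q_mono; [|exact HH]. cbv beta.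
          intros s hs. apply (P1 s hs). }
        apply Qev_false. eapply Qev_mono; [|exact (Qev_and _ _ Ha Hn)]. cbv beta. tauto. }
      eapply Qev_mono; [|exact (Qev_and _ _ H1 (Qev_of N _ (LS a) H))]. cbv beta.
      intros s [h1 h2]. exact (HF _ _ _ h1 h2).
  - intros [K [[S0 HK] [KU Hbox]]].
    set (n := levG w).
    set (S' := fun a : F -> Prop => forall v, K v -> proj1_sig v a).
    set (B := fun (i : Idx) (t : F) => forall a, In a i -> S' a -> a t).
    exists (S n, fun s => B (s n)). split.
    + apply (Qev_of (S n)).
      * intros k Hk s i. rewrite evG_set by (unfold n in *; lia). rewrite inI_set by (simpl; lia). tauto.
      * simpl. apply (DS _ _ (Dcone (fun _ => True))). intros i _.
        assert (Hb : Qev (fun s => nbhd F (evG w s) (B i))).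
        { apply (Hbox (B i)). intros v Kv. unfold ufset. apply (bigI_in F (proj1_sig v) (proj2_sig v) S').
          intros a _ Sa. apply Sa; auto. }
        apply (Qev_to n) in Hb.
        2:{ intros k Hk s j. rewrite evG_set by (unfold n in *; lia). tauto. }
        eapply Q_mono; [|exact Hb]. cbv beta. intros s hs. rewrite evG_set by (unfold n; lia).
        unfold inI; simpl. rewrite trunc_set_at. exact hs.
    + intros v Hv. apply KU. apply HK. intros a Sa0. unfold ufset; simpl.
      assert (S'a : S' a) by (intros v' Kv'; exact (proj1 (HK v') Kv' a Sa0)).
      assert (Cone : Qev (fun s => In a (trunc (S n) s n))).
      { apply (Qev_of (S n)).
        - intros k Hk s i. rewrite trunc_set by lia. tauto.
        - simpl. apply (DS _ _ (Dcone a)). intros i Hi. apply Q_all. intro s. rewrite trunc_set_at. exact Hi. }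
      eapply Qev_mono; [|exact (Qev_and _ _ Hv Cone)]. cbv beta. intros s [h1 h2].
      unfold inI in h1; simpl in h1. exact (h1 a h2 S'a).
Qed.

Lemma G_quasi : quasi_filter F -> quasi_filter G.
Proof.
  intros [_ QF]. split; [exact G_monotonic|].
  intros w X Y [A1 [H1 H2]] [A2 [H3 H4]].
  set (N := max (fst A1) (fst A2)).
  exists (N, fun s t => inI A1 s t /\ inI A2 s t). split.
  - eapply Qev_mono; [|exact (Qev_and _ _ H1 H3)]. cbv beta. intros s [h1 h3].
    apply (HF _ _ _ (QF _ _ _ h1 h3)). intros t [a b].
    change (inI A1 (trunc N s) t /\ inI A2 (trunc N s) t). rewrite !inI_trunc by lia. auto.
  - intros v Hv. split; [apply H2|apply H4]; eapply Qev_mono; try exact Hv; cbv beta; intros s hs;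
    change (inI A1 (trunc N s) (evG v s) /\ inI A2 (trunc N s) (evG v s)) in hs;
    rewrite !inI_trunc in hs by lia; tauto.
Qed.

End Constr.

Theorem lemma4p4 (F : nframe) (HF : monotonic F) :
  (exists G : nframe, lemma4p4_conclusion F G /\ monotonic G) /\
  (quasi_filter F -> exists G : nframe, lemma4p4_conclusion F G /\ quasi_filter G).
Proof.
  destruct (classic (exists w : F, True)) as [[w0 _]|NE].
  - destruct (UFM.exists_D (F -> Prop)) as [D [D0 [DS [DI [DC Dcone]]]]].
    assert (C : lemma4p4_conclusion F (G F w0 D)).
    { split.
      - exact (G_same_theory F HF w0 D D0 DS DI DC Dcone).
      - exists (h F w0 D D0 DS DI DC Dcone). split.
        + exact (h_surj F w0 D D0 DS DI DC Dcone).
        + exact (h_bm F HF w0 D D0 DS DI DC Dcone). }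
    split.
    + exists (G F w0 D). split; [exact C|]. apply G_monotonic.
    + intro QF. exists (G F w0 D). split; [exact C|]. eapply G_quasi; eauto.
  - assert (C : lemma4p4_conclusion F F).
    { split.
      - intros phi _. tauto.
      - exists (fun w : F => False_rect (ue F) (NE (ex_intro _ w I))). split.
        + intro b. exfalso. destruct b as [u [u0 [uT [uS _]]]]. apply u0.
          apply (uS _ _ uT). intros t _. apply NE. exists t. exact I.
        + intros w. exfalso. apply NE. exists w. exact I. }
    split.
    + exists F. split; auto.
    + intro QF. exists F. split; auto.
Qed.
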